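(* For coalescing random walks on a finite Markov chain, $P_t=\mathbb{E}(N_t^{-1})$ for every $t\ge0$.
   Context: $(V,\mathbf r)$ is a continuous-time irreducible Markov chain on a finite set $V$ ($|V|=n$) with symmetric rates. Coalescing random walks are realised via the graphical representation: each directed edge $(x,y)$ rings at the times of an independent Poisson process of rate $r_{x,y}$, and every particle at $x$ at such a time moves to $y$. Let $X_1,\dots,X_n$ be the paths of the particles started at the $n$ distinct states (so particles at the same location coincide thereafter). For paths, $\mathcal C(P_1,\dots,P_k)=\inf\{t:P_1(t)=\dots=P_k(t)\}$. Let $\iota$ be uniform on $\{1,\dots,n\}$ independent of everything, and $N_t:=|\{i:\mathcal C(X_i,X_\iota)\le t\}|$. $P_t:=\mathbb{E}|\xi_t|/|V|$ where $\xi_t$ is the set of occupied states at time $t$. *)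

(* Defs.v *)
From HB Require Import structures.
From mathcomp Require Import all_boot all_order all_algebra finmap.
From mathcomp Require Import all_classical all_reals all_analysis.
Set Implicit Arguments. Unset Strict Implicit. Unset Printing Implicit Defensive.
Import Order.TTheory GRing.Theory Num.Theory.
Local Open Scope classical_set_scope.
Local Open Scope ring_scope.

(* a directed edge (x,y) carries a Poisson clock iff x <> y and r x y > 0 *)
Definition edge_ok (R : realType) (V : finType) (r : V -> V -> R) (e : V * V)
  : bool := (e.1 != e.2) && (0 < r e.1 e.2).

Definition irreducible_rates (R : realType) (V : finType) (r : V -> V -> R) :=
  forall x y : V, connect [rel a b | edge_ok r (a, b)] x y.

(* k-th (0-based) ring time of a clock with inter-arrival times W 0, W 1, ... *)
Definition ring_time (R : realType) (W : nat -> R) (k : nat) : R :=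
  \sum_(j < k.+1) W j.

Definition nrings (R : realType) (W : nat -> R) (t : R) : nat :=
  #|` fset_set [set k : nat | ring_time W k <= t] |.

Definition ring_events (R : realType) (V : finType) (r : V -> V -> R)
  (W : V * V -> nat -> R) (t : R) : seq (R * (V * V)) :=
  flatten [seq [seq (ring_time (W e) k, e) | k <- iota 0 (nrings (W e) t)]
          | e <- enum [set: V * V] & edge_ok r e].

Definition sorted_ring_events (R : realType) (V : finType) (r : V -> V -> R)
  (W : V * V -> nat -> R) (t : R) : seq (R * (V * V)) :=
  sort (fun a b : R * (V * V) => a.1 <= b.1) (ring_events r W t).

Definition crw_step (R : realType) (V : finType) (z : V) (ev : R * (V * V)) : V :=
  if z == ev.2.1 then ev.2.2 else z.

Definition crw_path (R : realType) (V : finType) (r : V -> V -> R)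
  (W : V * V -> nat -> R) (x : V) (t : R) : V :=
  foldl (@crw_step R V) x (sorted_ring_events r W t).

(* C(P1,P2) = inf {t >= 0 : P1 t = P2 t}  (in \bar R, inf of empty = +oo) *)
Definition coal_time (R : realType) (V : finType) (p1 p2 : R -> V) : \bar R :=
  ereal_inf (EFin @` [set s : R | 0 <= s /\ p1 s = p2 s]).

Definition occupied (R : realType) (V : finType) (r : V -> V -> R)
  (W : V * V -> nat -> R) (t : R) : {set V} :=
  [set crw_path r W x t | x : V].

Definition N_count (R : realType) (V : finType) (r : V -> V -> R)
  (W : V * V -> nat -> R) (io : V) (t : R) : nat :=
  #|[set i : V | (coal_time (crw_path r W i) (crw_path r W io) <= t%:E)%E]|.

Definition mutually_independent d (T : measurableType d) (R : realType)
  (P : probability T R) (I : choiceType) (S : set I) (X : I -> T -> R) :=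
  forall (J : {fset I}) (B : I -> set R),
    [set` J] `<=` S -> (forall i, measurable (B i)) ->
    P (\bigcap_(i in [set` J]) (X i @^-1` B i)) =
    (\prod_(i <- J) P (X i @^-1` B i))%E.

Definition generated_events d (T : measurableType d) (R : realType)
  (I : Type) (S : set I) (X : I -> T -> R) : set (set T) :=
  <<s [set A | exists i B, S i /\ measurable B /\ A = X i @^-1` B] >>.

(* Main.v *)
Require Import Defs.
From HB Require Import structures.
From mathcomp Require Import all_boot all_order all_algebra finmap.
From mathcomp Require Import all_classical all_reals all_analysis.
From mathcomp Require Import measurable_realfun.
Set Implicit Arguments. Unset Strict Implicit. Unset Printing Implicit Defensive.
Import Order.TTheory GRing.Theory Num.Theory.
Local Open Scope classical_set_scope.
Local Open Scope ring_scope.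
Local Notation filter := seq.filter.

Section Disc.
Context d (T : measurableType d).

Definition disc (X : countType) (f : T -> X) := forall x, measurable (f @^-1` [set x]).

Lemma disc_dep (X Y : countType) (c : T -> X) (F : X -> T -> Y) :
  disc c -> (forall x, disc (F x)) -> disc (fun w => F (c w) w).
Proof.
move=> dc dF y.
pose A (n : nat) : set T := if (choice.unpickle n : option X) is Some x then
   c @^-1` [set x] `&` F x @^-1` [set y] else set0.
have -> : (fun w => F (c w) w) @^-1` [set y] = \bigcup_n A n.
  apply/seteqP; split => w.
    move=> Hw; exists (choice.pickle (c w)) => //; by rewrite /A choice.pickleK; split.
  case=> n _; rewrite /A; case: (choice.unpickle n) => [x|] // [].
  by rewrite /preimage /= => ->.
apply: bigcupT_measurable => n; rewrite /A; case: (choice.unpickle n) => [x|].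
  by apply: measurableI; [exact: dc | exact: dF].
exact: measurable0.
Qed.

Lemma disc_comp (X Y : countType) (c : T -> X) (h : X -> Y) :
  disc c -> disc (fun w => h (c w)).
Proof.
move=> dc; apply: (@disc_dep _ _ c (fun x _ => h x)) => // x y.
case: (eqVneq (h x) y) => [<-|ne].
  by rewrite (_ : _ @^-1` _ = setT); [exact: measurableT | apply/seteqP; split => w].
rewrite (_ : _ @^-1` _ = set0); first exact: measurable0.
by apply/seteqP; split => w //= E; rewrite E eqxx in ne.
Qed.

Lemma disc_pair (X Y : countType) (f : T -> X) (g : T -> Y) :
  disc f -> disc g -> disc (fun w => (f w, g w)).
Proof.
move=> df dg [x y].
have -> : (fun w => (f w, g w)) @^-1` [set (x, y)] =
   f @^-1` [set x] `&` g @^-1` [set y].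
  by apply/seteqP; split => w /=; [case=> -> ->| case=> -> ->].
exact: measurableI.
Qed.

Lemma disc_cst (X : countType) (x0 : X) : disc (fun _ : T => x0).
Proof.
apply: (@disc_comp _ _ (fun _ => tt) (fun _ => x0)) => -[].
by rewrite (_ : _ @^-1` _ = setT); [exact: measurableT | apply/seteqP; split => w].
Qed.

Lemma disc_ffun (K : finType) (X : countType) (f : K -> T -> X) :
  (forall k, disc (f k)) -> disc (fun w => [ffun k => f k w]).
Proof.
move=> df m.
have -> : (fun w => [ffun k => f k w]) @^-1` [set m] =
   \bigcap_(k in [set: K]) (f k @^-1` [set m k]).
  apply/seteqP; split => w /=.
    by move=> <- k _; rewrite /= ffunE.
  by move=> H; apply/ffunP => k; rewrite ffunE; apply: H.
apply: fin_bigcap_measurable; [exact: finite_finset | move=> k _; exact: df].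
Qed.

Lemma disc_bool_meas (f : T -> bool) : measurable_fun setT f -> disc f.
Proof.
move=> mf b; rewrite -[_ @^-1` _]setTI; apply: mf => //.
Qed.

End Disc.

Section Clock.
Context (R : realType) (w : nat -> R).
Hypothesis hw : forall k, 0 < w k.
Hypothesis hunb : forall M : R, exists k, M < ring_time w k.

Lemma rt_ltS k : ring_time w k < ring_time w k.+1.
Proof. by rewrite /ring_time [X in _ < X]big_ord_recr /= ltrDl. Qed.

Lemma rt_lt k l : (k < l)%N -> ring_time w k < ring_time w l.
Proof.
elim: l => // l IH; rewrite ltnS leq_eqVlt => /orP[/eqP ->|/IH H].
  exact: rt_ltS.
exact: lt_trans H (rt_ltS l).
Qed.

Lemma rt_le k l : (k <= l)%N -> ring_time w k <= ring_time w l.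
Proof. by rewrite leq_eqVlt => /orP[/eqP ->//|/rt_lt/ltW]. Qed.

Lemma nrings_spec t k : (ring_time w k <= t) = (k < nrings w t)%N.
Proof.
have ex : exists k, t < ring_time w k by [].
pose m := ex_minn ex.
have Hm : [set k | ring_time w k <= t] = `I_m.
  apply/seteqP; split => j /=.
    move=> hj; rewrite /m; case: ex_minnP => m0 Hm0 Hmin.
    rewrite ltnNge; apply/negP => /rt_le hle.
    by move: (lt_le_trans Hm0 hle); rewrite ltNge hj.
  rewrite /m; case: ex_minnP => m0 Hm0 Hmin hj.
  rewrite leNgt; apply/negP => /Hmin; by rewrite leqNgt hj.
have -> : nrings w t = m.
  by rewrite /nrings Hm; apply: card_fset_set; exact: card_eqxx.
apply/idP/idP.
  by move=> hk; have : [set k | ring_time w k <= t] k by []; rewrite Hm.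
by move=> hk; have : `I_m k by []; rewrite -Hm.
Qed.

End Clock.

Lemma filter_flatten_ (T : Type) (p : pred T) (L : seq (seq T)) :
  filter p (flatten L) = flatten (map (filter p) L).
Proof. by elim: L => //= s L IH; rewrite filter_cat IH. Qed.



Lemma nat_lt_ext (a b : nat) : (forall k, (k < a)%N = (k < b)%N) -> a = b.
Proof.
move=> H; apply/eqP; rewrite eqn_leq; apply/andP; split.
  by rewrite leqNgt H ltnn.
by rewrite leqNgt -H ltnn.
Qed.

Lemma ex_right_const (R : realType) (X : eqType) (t : R) (l : seq X)
  (P : X -> R -> Prop) :
  (forall x, x \in l -> exists2 u, t < u & forall s, t <= s -> s < u -> P x s) ->
  exists2 u, t < u & forall s, t <= s -> s < u -> forall x, x \in l -> P x s.
Proof.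
elim: l => [|x l IH] H.
  by exists (t + 1); [rewrite ltrDl | move=> s _ _ x].
have [u1 tu1 H1] := H x (mem_head _ _).
have [u2 tu2 H2] : exists2 u, t < u & forall s, t <= s -> s < u -> forall y, y \in l -> P y s.
  by apply: IH => y yl; apply: H; rewrite inE yl orbT.
exists (Order.min u1 u2); first by rewrite lt_min tu1 tu2.
move=> s ts; rewrite lt_min => /andP[su1 su2] y; rewrite inE => /orP[/eqP ->|yl].
  exact: H1.
exact: H2.
Qed.

Section Paths.
Context (R : realType) (V : finType) (r : V -> V -> R) (Wc : V * V -> nat -> R).
Hypothesis hpos : forall e k, edge_ok r e -> 0 < Wc e k.
Hypothesis hunb : forall e (M : R), edge_ok r e -> exists k, M < ring_time (Wc e) k.

Definition leev := fun a b : R * (V * V) => a.1 <= b.1.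

Lemma leev_total : total leev.
Proof. by move=> a b; rewrite /leev le_total. Qed.
Lemma leev_trans : transitive leev.
Proof. by move=> a b c; rewrite /leev; apply: le_trans. Qed.

Lemma ring_events_prefix s t : s <= t ->
  ring_events r Wc s = filter (fun ev => ev.1 <= s) (ring_events r Wc t).
Proof.
move=> st; rewrite /ring_events filter_flatten_ -map_comp; congr flatten.
apply/eq_in_map => e; rewrite mem_filter => /andP[he _] /=.
rewrite filter_map /=; congr map.
have sp := @nrings_spec R (Wc e) (fun k => hpos k he) (fun M => hunb M he).
have le_n : (nrings (Wc e) s <= nrings (Wc e) t)%N.
  case E: (nrings (Wc e) s) => [//|n].
  by rewrite -sp (le_trans _ st) // sp E.
rewrite -(subnKC le_n) iotaD filter_cat add0n.
rewrite (@eq_in_filter _ _ predT); last first.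
  by move=> k; rewrite mem_iota /= add0n sp.
rewrite filter_predT (@eq_in_filter _ _ pred0); last first.
  by move=> k; rewrite mem_iota /= sp => /andP[]; rewrite leqNgt => /negbTE.
by rewrite filter_pred0 cats0.
Qed.

Lemma sorted_split (p : R) (L : seq (R * (V * V))) : sorted leev L ->
  L = filter (fun ev => ev.1 <= p) L ++ filter (predC (fun ev => ev.1 <= p)) L.
Proof.
elim: L => //= x L IH hs.
have hL : sorted leev L := path_sorted hs.
case: ifP => hx /=.
  by rewrite -IH.
idtac.
have allge : all (leev x) L.
  by apply: order_path_min => //; exact: leev_trans.
rewrite (@eq_in_filter _ _ pred0); last first.
  move=> y yL /=; apply/negbTE/negP => yp.
  move/allP: allge => /(_ y yL); rewrite /leev => xy.
  by move: hx; rewrite (le_trans xy yp).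
rewrite filter_pred0 /=; congr cons.
rewrite (@eq_in_filter _ _ predT) ?filter_predT //.
move=> y yL /=; apply/negP => yp.
move/allP: allge => /(_ y yL); rewrite /leev => xy.
by move: hx; rewrite (le_trans xy yp).
Qed.

Lemma crw_path_prefix s t : s <= t ->
  exists rest, forall y, crw_path r Wc y t = foldl (@crw_step R V) (crw_path r Wc y s) rest.
Proof.
move=> st.
exists (filter (predC (fun ev : R * (V * V) => ev.1 <= s)) (sorted_ring_events r Wc t)) => y.
rewrite /crw_path {1}(@sorted_split s (sorted_ring_events r Wc t)); last first.
  exact: (sort_sorted leev_total).
rewrite foldl_cat; congr (foldl _ (foldl _ _ _) _).
rewrite /sorted_ring_events (ring_events_prefix st).
rewrite (filter_sort leev_total leev_trans) //.
Qed.

Lemma ring_events_right t :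
  exists2 u, t < u & forall s, t <= s -> s < u -> ring_events r Wc s = ring_events r Wc t.
Proof.
have H : forall e, e \in [seq e <- enum [set: V * V] | edge_ok r e] ->
  exists2 u, t < u & forall s, t <= s -> s < u -> nrings (Wc e) s = nrings (Wc e) t.
  move=> e; rewrite mem_filter => /andP[he _].
  have sp := @nrings_spec R (Wc e) (fun k => hpos k he) (fun M => hunb M he).
  exists (ring_time (Wc e) (nrings (Wc e) t)).
    by rewrite ltNge sp ltnn.
  move=> s ts su; apply: nat_lt_ext => k; rewrite -!sp.
  apply/idP/idP => hk; last exact: le_trans hk ts.
  have : (k < nrings (Wc e) t)%N.
    rewrite ltnNge; apply/negP => /(rt_le (fun j => hpos j he)) hle.
    by move: (le_lt_trans hle (le_lt_trans hk su)); rewrite ltxx.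
  by rewrite -sp.
have [u tu Hu] := @ex_right_const R _ t _
  (fun e s => nrings (Wc e) s = nrings (Wc e) t) H.
exists u => // s ts su; rewrite /ring_events; congr flatten.
by apply/eq_in_map => e he /=; rewrite (Hu s ts su e he).
Qed.

Lemma coal_timeE i v t : 0 <= t ->
  (coal_time (crw_path r Wc i) (crw_path r Wc v) <= t%:E)%E =
  (crw_path r Wc i t == crw_path r Wc v t).
Proof.
move=> t0; apply/idP/idP; last first.
  by move/eqP=> E; apply: ereal_inf_lbound; exists t.
apply: contraLR => /eqP ne; rewrite -ltNge.
have [u tu Hu] := ring_events_right t.
apply: (@lt_le_trans _ _ u%:E); first by rewrite lte_fin.
apply/ereal_infP => _ [s [s0 eqs] <-]; rewrite lee_fin.
rewrite leNgt; apply/negP => su.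
case: (lerP s t) => hst.
  have [rest Hr] := crw_path_prefix hst.
  by apply: ne; rewrite !Hr eqs.
apply: ne; rewrite /crw_path /sorted_ring_events -(Hu s (ltW hst) su).
exact: eqs.
Qed.

End Paths.

Definition step2 (V : finType) (z : V) (e : V * V) : V := if z == e.1 then e.2 else z.

Lemma foldl_crw (R : realType) (V : finType) x (L : seq (R * (V * V))) :
  foldl (@crw_step R V) x L = foldl (@step2 V) x (map snd L).
Proof. by elim: L x => //= ev L IH x; rewrite IH. Qed.

Section Meas.
Context (R : realType) (V : finType) (r : V -> V -> R)
  (d : measure_display) (Omega : measurableType d)
  (W : V * V -> nat -> Omega -> R).
Let G0 := [set A | exists i B, [set i | edge_ok r i.1] i /\ measurable B /\
   A = (fun i => W i.1 i.2) i @^-1` B].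
Let T := g_sigma_algebraType G0.
Hypothesis hpos : forall w e k, edge_ok r e -> 0 < W e k w.
Hypothesis hunb : forall w e (M : R), edge_ok r e ->
     exists k, M < ring_time (fun j => W e j w) k.
Variable t : R.

Let Wc (w : Omega) := fun e j => W e j w.
Let E := [seq e <- enum [set: V * V] | edge_ok r e].

Lemma mW e k : edge_ok r e -> measurable_fun setT (W e k : T -> R).
Proof.
move=> he _ B mB; rewrite setTI; apply: sub_gen_smallest.
by exists (e, k), B.
Qed.

Lemma mrt e k : edge_ok r e ->
  measurable_fun setT (fun w : T => ring_time (Wc w e) k).
Proof.
move=> he; rewrite /ring_time.
by apply: measurable_sum => j; exact: mW.
Qed.

Lemma disc_nrings e : edge_ok r e -> disc (fun w : T => nrings (Wc w e) t).
Proof.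
move=> he m.
have sp w := @nrings_spec R (Wc w e) (fun k => hpos w k he) (fun M => hunb w M he) t.
pose b (w : T) := if m is n.+1 then (ring_time (Wc w e) n <= t) && (t < ring_time (Wc w e) n.+1)
                  else t < ring_time (Wc w e) 0.
have -> : (fun w : T => nrings (Wc w e) t) @^-1` [set m] = b @^-1` [set true].
  apply/seteqP; split => w /=; rewrite /b.
    move=> <-; case: (nrings _ _) (sp w) => [|n] spw.
      by rewrite ltNge spw.
    by rewrite ltNge !spw ltnn leqnn.
  case: m {b} => [|n]; first by rewrite ltNge sp; case: (nrings _ _).
  move/andP; rewrite ltNge !sp -leqNgt => -[h1 h2].
  by apply/eqP; rewrite eqn_leq h1 h2.
apply: disc_bool_meas; rewrite /b; case: m {b} => [|n].
  by apply: measurable_fun_ltr; [exact: measurable_cst | exact: mrt].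
apply: measurable_and.
  by apply: measurable_fun_ler; [exact: mrt | exact: measurable_cst].
by apply: measurable_fun_ltr; [exact: measurable_cst | exact: mrt].
Qed.


Definition cnt (w : Omega) : {ffun V * V -> nat} :=
  [ffun e => if edge_ok r e then nrings (Wc w e) t else 0%N].

Lemma disc_cnt : disc (cnt : T -> _).
Proof.
apply: disc_ffun => e /=; case: (boolP (edge_ok r e)) => he.
  exact: disc_nrings.
exact: disc_cst.
Qed.

Definition idx (c : {ffun V * V -> nat}) : seq ((V * V) * nat) :=
  flatten [seq [seq (e, k) | k <- iota 0 (c e)] | e <- E].

Definition rtw (w : Omega) (a : (V * V) * nat) := ring_time (Wc w a.1) a.2.

Definition Lc c (w : Omega) : seq (V * V) :=
  map fst (sort (fun a b => rtw w a <= rtw w b) (idx c)).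

Lemma LcE w : map snd (sorted_ring_events r (Wc w) t) = Lc (cnt w) w.
Proof.
rewrite /sorted_ring_events.
have -> : ring_events r (Wc w) t = map (fun a => (rtw w a, a.1)) (idx (cnt w)).
  rewrite /ring_events /idx map_flatten -map_comp; congr flatten.
  rewrite /E; apply/eq_in_map => e; rewrite mem_filter => /andP[he _] /=.
  by rewrite -map_comp ffunE he.
rewrite sort_map -map_comp /Lc.
by apply: eq_map.
Qed.

Lemma idx_edge c a : a \in idx c -> edge_ok r a.1.
Proof.
case/flattenP => s /mapP[e he ->] /mapP[k _ ->] /=.
by move: he; rewrite mem_filter => /andP[].
Qed.

Lemma disc_Lc c : disc (Lc c : T -> _).
Proof.
pose tu := in_tuple (idx c).
pose N := size (idx c).
pose h := fun i : 'I_N => tnth tu i.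
pose M (w : T) := [ffun ij : 'I_N * 'I_N => rtw w (h ij.1) <= rtw w (h ij.2)].
pose Hc (m : {ffun 'I_N * 'I_N -> bool}) :=
  map fst (map h (sort (fun i j => m (i, j)) (enum 'I_N))).
have -> : (Lc c : T -> _) = fun w => Hc (M w).
  apply: funext => w; rewrite /Lc /Hc.
  have {1}-> : idx c = map h (enum 'I_N) by rewrite /h map_tnth_enum.
  rewrite sort_map; congr (map _ (map _ (sort _ _))).
  by apply: funext => i; apply: funext => j; rewrite /M ffunE.
apply: disc_comp; apply: disc_ffun => ij; apply: disc_bool_meas.
have he i : edge_ok r (h i).1 by apply: (@idx_edge c); exact: mem_tnth.
by apply: measurable_fun_ler; apply: mrt.
Qed.

Definition Phi (w : Omega) : {ffun V -> V} := [ffun x => crw_path r (Wc w) x t].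

Lemma disc_Phi : disc (Phi : T -> _).
Proof.
have -> : (Phi : T -> _) = fun w => [ffun x => foldl (@step2 V) x (Lc (cnt w) w)].
  apply: funext => w; apply/ffunP => x; rewrite !ffunE /crw_path foldl_crw.
  by rewrite LcE.
have H1 := @disc_dep _ T _ _ cnt Lc disc_cnt disc_Lc.
exact: (disc_comp (fun l => [ffun x => foldl (@step2 V) x l]) H1).
Qed.

End Meas.

Lemma integral_finite_range d (T : measurableType d) (R : realType)
  (P : probability T R) (K : finType) (X : T -> K) (F : K -> R) :
  (forall k, measurable (X @^-1` [set k])) -> (forall k, 0 <= F k) ->
  (\int[P]_w (F (X w))%:E = \sum_(k : K) (F k)%:E * P (X @^-1` [set k]))%E.
Proof.
move=> mX F0.
transitivity (\int[P]_w (\sum_(k : K) (F k)%:E * (\1_(X @^-1` [set k]) w)%:E))%E.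
  apply: eq_integral => w _.
  rewrite (bigD1 (X w)) //= indicE mem_set // mule1 big1 ?adde0 //.
  move=> k /negbTE ne; rewrite indicE memNset ?mule0 //.
  by move=> /= E; rewrite E eqxx in ne.
rewrite ge0_integral_sum //; last first.
- by move=> k w _; rewrite -EFinM lee_fin mulr_ge0.
- move=> k; apply: measurable_funeM; apply/measurable_EFinP.
  exact: measurable_indic.
apply: eq_bigr => k _; rewrite ge0_integralZl //.
all: first [ by rewrite integral_indic // setIT
  | by apply/measurable_EFinP; exact: measurable_indic
  | by move=> w _; rewrite lee_fin | by rewrite lee_fin ].
Qed.

Lemma sum_inv_fiber (R : realType) (V : finType) (phi : {ffun V -> V}) :
  \sum_(v : V) ((#|[set i | phi i == phi v]%SET|%:R : R)^-1) = #|[set phi x | x : V]%SET|%:R.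
Proof.
rewrite (partition_big (fun v => phi v) (fun y => y \in [set phi x | x : V]%SET)); last first.
  by move=> v _; apply/imsetP; exists v.
rewrite -sumr_const; apply: eq_bigr => y /imsetP[x _ ->].
rewrite (eq_bigr (fun _ => (#|[set i | phi i == phi x]%SET|%:R : R)^-1)); last first.
  by move=> v /eqP ->.
rewrite (eq_bigl (fun v => v \in [set i | phi i == phi x]%SET)); last first.
  by move=> v; rewrite finset.in_set.
rewrite sumr_const -[_ *+ _]mulr_natr mulVf // pnatr_eq0 -lt0n.
by apply/card_gt0P; exists x; rewrite finset.in_set.
Qed.

Unset Implicit Arguments.

Theorem lemma2p1 (R : realType) (V : finType) (r : V -> V -> R)
  (d : measure_display) (Omega : measurableType d) (P : probability Omega R)
  (W : V * V -> nat -> Omega -> R) (iota : Omega -> V) :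
  (* symmetric, irreducible rates *)
  (forall x y : V, x != y -> 0 <= r x y) ->
  (forall x y : V, r x y = r y x) ->
  irreducible_rates r ->
  (* clock of edge e: i.i.d. Exp(r e) inter-arrival times W e 0, W e 1, ... *)
  (forall e k, edge_ok r e -> measurable_fun setT (W e k)) ->
  (forall e k, edge_ok r e -> forall B : set R, measurable B ->
     P (W e k @^-1` B) = exponential_prob (r e.1 e.2) B) ->
  (* all clocks of all edges are independent *)
  mutually_independent P [set i | edge_ok r i.1] (fun i => W i.1 i.2) ->
  (* realisations are counting processes: positive gaps, finitely many rings
     in bounded intervals *)
  (forall w e k, edge_ok r e -> 0 < W e k w) ->
  (forall w e (M : R), edge_ok r e ->
     exists k, M < ring_time (fun j => W e j w) k) ->
  (* iota uniform on V and independent of everything else *)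
  (forall v, measurable [set w | iota w = v]) ->
  (forall v, P [set w | iota w = v] = ((#|V|%:R)^-1)%:E) ->
  (forall v A, generated_events [set i | edge_ok r i.1] (fun i => W i.1 i.2) A ->
     P ([set w | iota w = v] `&` A) = (P [set w | iota w = v] * P A)%E) ->
  forall t : R, 0 <= t ->
  ('E_P[fun w => (#|occupied r (fun e j => W e j w) t|%:R : R)]
     * ((#|V|%:R)^-1)%:E
   = 'E_P[fun w => (((N_count r (fun e j => W e j w) (iota w) t)%:R)^-1)%R])%E.
Proof.
move=> _ _ _ hmeas _ _ hpos hunb hiom hioP hioind t t0.
pose Ph := Phi r W t.
have hgen phi : generated_events [set i | edge_ok r i.1] (fun i => W i.1 i.2)
    (Ph @^-1` [set phi]) := disc_Phi hpos hunb t phi.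
have gen_meas A : generated_events [set i | edge_ok r i.1] (fun i => W i.1 i.2) A ->
    measurable A.
  apply: smallest_sub; first exact: sigma_algebra_measurable.
  move=> _ [[e k] [B [he [mB ->]]]].
  by rewrite -[X in measurable X]setTI; exact: hmeas.
have mPh phi : measurable (Ph @^-1` [set phi]) := gen_meas _ (hgen phi).
have occE w : #|occupied r (fun e j => W e j w) t| = #|[set Ph w x | x : V]%SET|.
  suff -> : occupied r (fun e j => W e j w) t = [set Ph w x | x : V]%SET by [].
  rewrite /occupied; apply/setP => y; apply/imsetP/imsetP => -[x _ ->]; exists x => //;
  by rewrite /Ph /Phi ffunE.
have NE w : N_count r (fun e j => W e j w) (iota w) t =
    #|[set i | Ph w i == Ph w (iota w)]%SET|.
  apply: eq_card => i; rewrite finset.in_set /Ph /Phi !ffunE.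
  rewrite -(@coal_timeE R V r (fun e j => W e j w) (fun e k he => hpos w e k he)
     (fun e M he => hunb w e M he) i (iota w) t t0).
  apply/idP/idP => [/set_mem //|H]; exact: mem_set.
pose occf (phi : {ffun V -> V}) : R := #|[set phi x | x : V]%SET|%:R.
pose Hf (p : V * {ffun V -> V}) : R := (#|[set i | p.2 i == p.2 p.1]%SET|%:R)^-1.
pose XX w := (iota w, Ph w).
have XXE p : XX @^-1` [set p] = [set w | iota w = p.1] `&` Ph @^-1` [set p.2].
  case: p => v phi; apply/seteqP; split => w /=.
    by rewrite /XX /preimage /= => -[-> ->].
  by rewrite /XX /preimage /= => -[-> ->].
have mXX p : measurable (XX @^-1` [set p]) by rewrite XXE; exact: measurableI.
have L1 : ('E_P[fun w => (#|occupied r (fun e j => W e j w) t|%:R : R)] =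
    \sum_phi (occf phi)%:E * P (Ph @^-1` [set phi]))%E.
  rewrite unlock (eq_integral (fun w => (occf (Ph w))%:E)); last first.
    by move=> w _; rewrite occE.
  exact: (integral_finite_range P mPh (fun phi => ler0n _ _)).
have L2 : ('E_P[fun w => (((N_count r (fun e j => W e j w) (iota w) t)%:R)^-1)%R] =
    \sum_p (Hf p)%:E * P (XX @^-1` [set p]))%E.
  rewrite unlock (eq_integral (fun w => (Hf (XX w))%:E)); last first.
    by move=> w _; rewrite NE.
  apply: (@integral_finite_range _ _ _ P _ XX Hf mXX) => p.
  by rewrite invr_ge0 ler0n.
have Pfin A : measurable A -> P A = (fine (P A))%:E.
  by move=> mA; rewrite fineK // fin_num_measure.
pose pr phi := fine (P (Ph @^-1` [set phi])).
rewrite L1 L2.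
have R1 : (\sum_p (Hf p)%:E * P (XX @^-1` [set p]) =
    \sum_p (Hf p * ((#|V|%:R)^-1 * pr p.2))%:E)%E.
  by apply: eq_bigr => p _; rewrite XXE hioind // hioP (Pfin _ (mPh p.2)) -!EFinM.
have R0 : (\sum_phi (occf phi)%:E * P (Ph @^-1` [set phi]) =
    \sum_phi (occf phi * pr phi)%:E)%E.
  by apply: eq_bigr => phi _; rewrite (Pfin _ (mPh phi)) -EFinM.
rewrite R0 R1.
rewrite !sumEFin -EFinM; congr EFin.
rewrite (eq_bigr (fun p => (fun v phi => Hf (v, phi) * ((#|V|%:R)^-1 * pr phi)) p.1 p.2));
  last by case.
rewrite -(pair_bigA _ (fun v phi => Hf (v, phi) * ((#|V|%:R)^-1 * pr phi))) /= exchange_big /= mulr_suml.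
apply: eq_bigr => phi _; rewrite -mulr_suml /Hf /= sum_inv_fiber.
by rewrite -mulrA [pr phi * _]mulrC.
Qed.
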